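(* Let $f$ be the harmonic function on $K$ with $f(p_0)=\alpha$, $f(p_1)=\beta$, $f(p_2)=\gamma$. Then the restriction of $f$ to the edge $[p_1,p_2]$, viewed as a function on $[0,1]$, is strictly increasing if and only if $\beta<\gamma$ and $2\beta-\gamma\le\alpha\le2\gamma-\beta$. Equivalently, for nonconstant $f$, the restriction is strictly monotone if and only if $(3\beta-\delta)(3\gamma-\delta)\le0$, where $\delta=\alpha+\beta+\gamma$.
   Context: Let $p_0,p_1,p_2$ be the vertices of a unit equilateral triangle in $\mathbb{R}^2$, $F_i(x)=(x+p_i)/2$, and $K$ the Sierpinski gasket (the attractor of $F_0,F_1,F_2$). Minimal triangles of the graph $G_m$ are the triangles with vertices $F_w(p_0),F_w(p_1),F_w(p_2)$ for words $w$ of length $m$ ($F_w$ the corresponding composition). A continuous $f:K\to\mathbb{R}$ is harmonic if for every $m\ge0$ and every minimal triangle of $G_m$ with vertices $v_i,v_j,v_k$, the value at the midpoint $v_{ij}$ of $[v_i,v_j]$ is $\frac15(2f(v_i)+2f(v_j)+f(v_k))$; such $f$ is uniquely determined by $(f(p_0),f(p_1),f(p_2))$. The edge $[p_1,p_2]$ is identified with $[0,1]$ via $t\mapsto p_1+t(p_2-p_1)$. *)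

(* Defs.v *)
From HB Require Import structures.
From mathcomp Require Import all_boot all_order all_algebra.
From mathcomp Require Import all_classical all_reals all_analysis.
Set Implicit Arguments. Unset Strict Implicit. Unset Printing Implicit Defensive.
Import Order.TTheory GRing.Theory Num.Theory numFieldNormedType.Exports.
Local Open Scope classical_set_scope.
Local Open Scope ring_scope.

Section SG.
Variable R : realType.
Notation pt := (R * R)%type.

Definition sqdist (x y : pt) : R := (x.1 - y.1) ^+ 2 + (x.2 - y.2) ^+ 2.

Definition unit_equilateral (p0 p1 p2 : pt) : Prop :=
  sqdist p0 p1 = 1 /\ sqdist p1 p2 = 1 /\ sqdist p0 p2 = 1.

Definition vtx (p0 p1 p2 : pt) (i : 'I_3) : pt :=
  if val i == 0%N then p0 else if val i == 1%N then p1 else p2.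

Definition midpt (x y : pt) : pt := ((x.1 + y.1) / 2, (x.2 + y.2) / 2).

Definition Fmap (p0 p1 p2 : pt) (i : 'I_3) (x : pt) : pt := midpt x (vtx p0 p1 p2 i).

(* F_w = F_{w_1} o ... o F_{w_m} for w = [:: w_1; ...; w_m] *)
Definition Fword (p0 p1 p2 : pt) (w : seq 'I_3) (x : pt) : pt :=
  foldr (fun i (g : pt -> pt) => fun y => Fmap p0 p1 p2 i (g y)) id w x.

Definition is_attractor (p0 p1 p2 : pt) (K : set pt) : Prop :=
  compact K /\ K !=set0 /\ K = \bigcup_(i in [set: 'I_3]) (Fmap p0 p1 p2 i @` K).

Definition sg_harmonic (p0 p1 p2 : pt) (K : set pt) (f : pt -> R) : Prop :=
  {within K, continuous f} /\
  forall (m : nat) (w : seq 'I_3), size w = m ->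
  forall i j k : 'I_3, i != j -> j != k -> i != k ->
    let v := fun l => Fword p0 p1 p2 w (vtx p0 p1 p2 l) in
    f (midpt (v i) (v j)) = (2 * f (v i) + 2 * f (v j) + f (v k)) / 5.

Definition edge12 (p1 p2 : pt) (t : R) : pt :=
  (p1.1 + t * (p2.1 - p1.1), p1.2 + t * (p2.2 - p1.2)).

Definition strictly_increasing01 (g : R -> R) : Prop :=
  forall s t, 0 <= s -> s < t -> t <= 1 -> g s < g t.
Definition strictly_decreasing01 (g : R -> R) : Prop :=
  forall s t, 0 <= s -> s < t -> t <= 1 -> g t < g s.

End SG.

(* Main.v *)
Require Import Defs.
From HB Require Import structures.
From mathcomp Require Import all_boot all_order all_algebra.
From mathcomp Require Import all_classical all_reals all_analysis.
From mathcomp Require Import ring lra zify.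
Import Order.TTheory GRing.Theory Num.Theory numFieldNormedType.Exports.
Local Open Scope classical_set_scope.
Local Open Scope ring_scope.
Set Implicit Arguments. Unset Strict Implicit.

Ltac fld := field; rewrite ?expf_neq0 ?pnatr_eq0 //=.


Section Alg.
Variable R : realType.
Variables p0 p1 p2 : (R * R)%type.

Definition i0 : 'I_3 := @Ordinal 3 0 isT.
Definition i1 : 'I_3 := @Ordinal 3 1 isT.
Definition i2 : 'I_3 := @Ordinal 3 2 isT.

Definition V (w : seq 'I_3) (j : 'I_3) := Fword p0 p1 p2 w (vtx p0 p1 p2 j).

Lemma Fword_cons i w x : Fword p0 p1 p2 (i :: w) x = Fmap p0 p1 p2 i (Fword p0 p1 p2 w x).
Proof. by []. Qed.

Lemma Fword_midpt w x y :
  Fword p0 p1 p2 w (midpt x y) = midpt (Fword p0 p1 p2 w x) (Fword p0 p1 p2 w y).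
Proof.
elim: w => [//|i w IH]; rewrite !Fword_cons IH /Fmap /midpt /=.
congr (_, _); fld.
Qed.

Lemma Fword_rcons w i x : Fword p0 p1 p2 (rcons w i) x = Fword p0 p1 p2 w (Fmap p0 p1 p2 i x).
Proof. by elim: w => [//|a w IH]; rewrite rcons_cons !Fword_cons IH. Qed.

Lemma V_rcons w i j : V (rcons w i) j = midpt (V w j) (V w i).
Proof. by rewrite /V Fword_rcons /Fmap Fword_midpt. Qed.

Lemma midpt_id (x : R * R) : midpt x x = x.
Proof. case: x => a b; rewrite /midpt /=; congr (_, _); fld. Qed.

Lemma edge_left (q1 q2 : R * R) t :
  edge12 (midpt q1 q1) (midpt q2 q1) t = edge12 q1 q2 (t / 2).
Proof. rewrite /edge12 /midpt /=; congr (_, _); fld. Qed.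

Lemma edge_right (q1 q2 : R * R) t :
  edge12 (midpt q1 q2) (midpt q2 q2) t = edge12 q1 q2 ((1 + t) / 2).
Proof. rewrite /edge12 /midpt /=; congr (_, _); fld. Qed.

Lemma edge0 (q1 q2 : R * R) : edge12 q1 q2 0 = q1.
Proof. by case: q1 => a b; rewrite /edge12 /= !mul0r !addr0. Qed.

Lemma edge1 (q1 q2 : R * R) : edge12 q1 q2 1 = q2.
Proof. by case: q1 q2 => a b [c d]; rewrite /edge12 /= !mul1r !subrKC. Qed.

Definition E w t := edge12 (V w i1) (V w i2) t.

Lemma E_left w t : E (rcons w i1) t = E w (t / 2).
Proof. by rewrite /E !V_rcons edge_left. Qed.

Lemma E_right w t : E (rcons w i2) t = E w ((1 + t) / 2).
Proof. by rewrite /E !V_rcons edge_right. Qed.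

Lemma Fword_dist w x y :
  (Fword p0 p1 p2 w x).1 - (Fword p0 p1 p2 w y).1 = (x.1 - y.1) / 2 ^+ size w /\
  (Fword p0 p1 p2 w x).2 - (Fword p0 p1 p2 w y).2 = (x.2 - y.2) / 2 ^+ size w.
Proof.
elim: w => [|i w [IH1 IH2]] /=; first by rewrite expr0 !divr1.
rewrite /Fmap /midpt /= exprS; split.
- have -> : ((Fword p0 p1 p2 w x).1 + (vtx p0 p1 p2 i).1) / 2 -
   ((Fword p0 p1 p2 w y).1 + (vtx p0 p1 p2 i).1) / 2 =
   ((Fword p0 p1 p2 w x).1 - (Fword p0 p1 p2 w y).1) / 2 by fld.
  rewrite IH1; fld.
- have -> : ((Fword p0 p1 p2 w x).2 + (vtx p0 p1 p2 i).2) / 2 -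
   ((Fword p0 p1 p2 w y).2 + (vtx p0 p1 p2 i).2) / 2 =
   ((Fword p0 p1 p2 w x).2 - (Fword p0 p1 p2 w y).2) / 2 by fld.
  rewrite IH2; fld.
Qed.

End Alg.


Section Reals.
Variable R : realType.

Lemma two_pow_gt0 n : 0 < (2 : R) ^+ n.
Proof. by rewrite exprn_gt0. Qed.

Lemma nat_lt_pow n : (n%:R : R) < 2 ^+ n.
Proof. by rewrite -natrX ltr_nat ltn_expl. Qed.

Lemma pow_big (C : R) {e : R} : 0 < e -> exists n : nat, C < e * 2 ^+ n.
Proof.
move=> e0; exists (Num.Def.trunc (C / e)).+1.
have h1 := truncnS_gt (C / e).
have h2 := nat_lt_pow (Num.Def.trunc (C / e)).+1.
have h3 : C / e < 2 ^+ (Num.Def.trunc (C / e)).+1 by exact: lt_trans h1 h2.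
have hC : C = (C / e) * e by fld; rewrite gt_eqF.
by rewrite {1}hC [X in X < _]mulrC ltr_pM2l.
Qed.

Lemma dyadic_between {u v : R} : 0 <= u -> u < v -> v <= 1 ->
  exists m k, (k <= 2 ^ m)%N /\ u < k%:R / 2 ^+ m /\ k%:R / 2 ^+ m < v.
Proof.
move=> u0 uv v1.
have vu0 : 0 < v - u by rewrite subr_gt0.
have [m hm] := pow_big 1 vu0.
set P := (2 : R) ^+ m.
have P0 : 0 < P by exact: two_pow_gt0.
set k := (Num.Def.trunc (u * P)).+1.
have hk1 : u * P < k%:R by exact: truncnS_gt.
have hk2 : k%:R <= u * P + 1.
  rewrite /k -addn1 natrD; apply: lerD => //; rewrite truncn_le.
  exact: mulr_ge0 (ltW P0).
have e1 : u < k%:R / P by rewrite ltr_pdivlMr.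
have e2 : k%:R / P < v.
  rewrite ltr_pdivrMr //. apply: (le_lt_trans hk2). 
  move: hm; rewrite mulrBl -/P; lra.
exists m, k; split => //.
rewrite -ltnS -(ltr_nat R) -addn1 natrD natrX -/P.
have : k%:R < v * P by rewrite -ltr_pdivrMr.
have : v * P <= P by rewrite ler_piMl // ltW.
lra.
Qed.

Lemma dyadic_near (t d : R) : 0 <= t -> t <= 1 -> 0 < d ->
  exists m k, (k <= 2 ^ m)%N /\ `|t - k%:R / 2 ^+ m| < d.
Proof.
move=> t0 t1 d0.
case: (ltP t 1) => ht.
  have q1 : t < Num.min (t + d) 1 by rewrite lt_min ht andbT ltrDl.
  have q2 : Num.min (t + d) 1 <= 1 by rewrite ge_min lexx orbT.
  have [m [k [hk [h1 h2]]]] := dyadic_between t0 q1 q2.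
  exists m, k; split => //.
  move: h2; rewrite lt_min => /andP [h2 _].
  rewrite distrC ger0_norm; [lra | lra].
exists 0%N, 1%N; split => //.
have -> : t = 1 by apply/eqP; rewrite eq_le t1 ht.
by rewrite expr0 divr1 subrr normr0.
Qed.

End Reals.

Unset Implicit Arguments.
Module P2.


Section Harm.
Variable R : realType.
Variables p0 p1 p2 : (R * R)%type.
Variable f : R * R -> R.
Hypothesis Hharm : forall w (i j k : 'I_3), i != j -> j != k -> i != k ->
  f (midpt (V p0 p1 p2 w i) (V p0 p1 p2 w j)) =
  (2 * f (V p0 p1 p2 w i) + 2 * f (V p0 p1 p2 w j) + f (V p0 p1 p2 w k)) / 5.

Notation fa w := (f (V p0 p1 p2 w i0)).
Notation fb w := (f (V p0 p1 p2 w i1)).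
Notation fc w := (f (V p0 p1 p2 w i2)).
Definition g w t := f (E p0 p1 p2 w t).

Lemma va_l w : fa (rcons w i1) = (2 * fa w + 2 * fb w + fc w) / 5.
Proof. by rewrite V_rcons (Hharm w i0 i1 i2). Qed.
Lemma vb_l w : fb (rcons w i1) = fb w.
Proof. by rewrite V_rcons midpt_id. Qed.
Lemma vc_l w : fc (rcons w i1) = (2 * fc w + 2 * fb w + fa w) / 5.
Proof. by rewrite V_rcons (Hharm w i2 i1 i0). Qed.
Lemma va_r w : fa (rcons w i2) = (2 * fa w + 2 * fc w + fb w) / 5.
Proof. by rewrite V_rcons (Hharm w i0 i2 i1). Qed.
Lemma vb_r w : fb (rcons w i2) = (2 * fb w + 2 * fc w + fa w) / 5.
Proof. by rewrite V_rcons (Hharm w i1 i2 i0). Qed.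
Lemma vc_r w : fc (rcons w i2) = fc w.
Proof. by rewrite V_rcons midpt_id. Qed.

Lemma g_left w t : g (rcons w i1) t = g w (t / 2).
Proof. by rewrite /g E_left. Qed.
Lemma g_right w t : g (rcons w i2) t = g w ((1 + t) / 2).
Proof. by rewrite /g E_right. Qed.
Lemma g0 w : g w 0 = fb w.
Proof. by rewrite /g /E edge0. Qed.
Lemma g1 w : g w 1 = fc w.
Proof. by rewrite /g /E edge1. Qed.

Definition inv (a b c : R) := b < c /\ 2 * b - c <= a /\ a <= 2 * c - b.

Lemma dyad_inc m : forall w, inv (fa w) (fb w) (fc w) ->
  forall k l, (k < l)%N -> (l <= 2 ^ m)%N ->
  g w (k%:R / 2 ^+ m) < g w (l%:R / 2 ^+ m).
Proof.
elim: m => [|m IH] w Hinv k l kl lm.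
  have -> : k = 0%N by lia.
  have -> : l = 1%N by lia.
  by rewrite expr0 !divr1 g0 g1; case: Hinv.
have Hl : inv (fa (rcons w i1)) (fb (rcons w i1)) (fc (rcons w i1)).
  rewrite va_l vb_l vc_l; move: Hinv; rewrite /inv; lra.
have Hr : inv (fa (rcons w i2)) (fb (rcons w i2)) (fc (rcons w i2)).
  rewrite va_r vb_r vc_r; move: Hinv; rewrite /inv; lra.
have A : forall k l, (k < l)%N -> (l <= 2 ^ m)%N ->
    g w (k%:R / 2 ^+ m.+1) < g w (l%:R / 2 ^+ m.+1).
  move=> k' l' kl' lm'.
  have e : forall x : R, x / 2 ^+ m.+1 = (x / 2 ^+ m) / 2 by move=> x; rewrite exprS; fld.
  rewrite !e -!g_left; exact: IH.
have B : forall k l, (2 ^ m <= k)%N -> (k < l)%N -> (l <= 2 ^ m.+1)%N ->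
    g w (k%:R / 2 ^+ m.+1) < g w (l%:R / 2 ^+ m.+1).
  move=> k' l' mk kl' lm'.
  have e : forall n, (2 ^ m <= n)%N ->
      n%:R / 2 ^+ m.+1 = (1 + (n - 2 ^ m)%:R / 2 ^+ m) / 2 :> R.
    by move=> n hn; rewrite natrB // natrX exprS; fld.
  rewrite (e k') // (e l'); last by lia.
  rewrite -!g_right; apply: IH => //.
  - lia.
  - rewrite expnS in lm'; lia.
case: (leqP l (2 ^ m)) => hl; first exact: A.
case: (leqP (2 ^ m) k) => hk; first exact: B.
apply: (@lt_trans _ _ (g w ((2 ^ m)%:R / 2 ^+ m.+1))).
  exact: A.
by apply: B.
Qed.


Definition HCont := forall t, 0 <= t -> t <= 1 -> forall e, 0 < e ->
  exists2 d, 0 < d & forall m k, (k <= 2 ^ m)%N -> `|t - k%:R / 2 ^+ m| < d ->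
  `|g [::] t - g [::] (k%:R / 2 ^+ m)| < e.

Lemma dy_bounds {m k} : (k <= 2 ^ m)%N -> 0 <= k%:R / 2 ^+ m :> R /\ k%:R / 2 ^+ m <= 1 :> R.
Proof.
move=> hk; split; first by rewrite divr_ge0 // ltW // two_pow_gt0.
by rewrite ler_pdivrMr ?two_pow_gt0 // mul1r -natrX ler_nat.
Qed.

Section Inc.
Hypothesis Hinv : inv (fa [::]) (fb [::]) (fc [::]).

Lemma DS {m k m' k'} : (k <= 2 ^ m)%N -> (k' <= 2 ^ m')%N ->
  k%:R / 2 ^+ m < k'%:R / 2 ^+ m' :> R ->
  g [::] (k%:R / 2 ^+ m) < g [::] (k'%:R / 2 ^+ m').
Proof.
move=> hk hk' lt.
have eA : k%:R / 2 ^+ m = (k * 2 ^ m')%:R / 2 ^+ (m + m') :> R.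
  by rewrite natrM natrX exprD; fld.
have eB : k'%:R / 2 ^+ m' = (k' * 2 ^ m)%:R / 2 ^+ (m + m') :> R.
  by rewrite natrM natrX exprD; fld.
rewrite eA eB; apply: dyad_inc => //.
  by move: lt; rewrite eA eB ltr_pM2r ?invr_gt0 ?two_pow_gt0 // ltr_nat.
by rewrite expnD mulnC leq_mul2l hk' orbT.
Qed.

Hypothesis HC : HCont.

Lemma le_left s m k : 0 <= s -> s <= 1 -> (k <= 2 ^ m)%N -> s < k%:R / 2 ^+ m ->
  g [::] s <= g [::] (k%:R / 2 ^+ m).
Proof.
move=> s0 s1 hk sd; rewrite leNgt; apply/negP => hlt.
have e0 : 0 < g [::] s - g [::] (k%:R / 2 ^+ m) by rewrite subr_gt0.
have [d d0 hd] := HC _ s0 s1 _ e0.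
have [_ hd1] := dy_bounds hk.
have q1 : s < Num.min (s + d) (k%:R / 2 ^+ m) by rewrite lt_min sd andbT ltrDl.
have q2 : Num.min (s + d) (k%:R / 2 ^+ m) <= 1 by rewrite ge_min hd1 orbT.
have [m' [k' [hk' [h1 h2]]]] := dyadic_between s0 q1 q2.
move: h2; rewrite lt_min => /andP [h2 h3].
have := hd m' k' hk'; rewrite distrC ger0_norm; last by lra.
move=> /(_ ltac:(lra)) h4.
have := DS hk' hk h3.
move: h4; rewrite ltr_norml; lra.
Qed.

Lemma le_right t m k : 0 <= t -> t <= 1 -> (k <= 2 ^ m)%N -> k%:R / 2 ^+ m < t ->
  g [::] (k%:R / 2 ^+ m) <= g [::] t.
Proof.
move=> t0 t1 hk dt; rewrite leNgt; apply/negP => hlt.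
have e0 : 0 < g [::] (k%:R / 2 ^+ m) - g [::] t by rewrite subr_gt0.
have [d d0 hd] := HC _ t0 t1 _ e0.
have [hd0 _] := dy_bounds hk.
have q0 : 0 <= Num.max (t - d) (k%:R / 2 ^+ m) by rewrite le_max hd0 orbT.
have q1 : Num.max (t - d) (k%:R / 2 ^+ m) < t by rewrite gt_max dt andbT gtrBl.
have [m' [k' [hk' [h1 h2]]]] := dyadic_between q0 q1 t1.
move: h1; rewrite gt_max => /andP [h1 h3].
have := hd m' k' hk'; rewrite ger0_norm; last by lra.
move=> /(_ ltac:(lra)) h4.
have := DS hk hk' h3.
move: h4; rewrite ltr_norml; lra.
Qed.

Lemma inc_of_inv : strictly_increasing01 (g [::]).
Proof.
move=> s t s0 st t1.
have [m [k [hk [h1 h2]]]] := dyadic_between s0 st t1.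
have [hd0 _] := dy_bounds hk.
have [m' [k' [hk' [h3 h4]]]] := dyadic_between hd0 h2 t1.
apply: (le_lt_trans (@le_left s m k _ _ hk h1)); [lra|lra|].
apply: (lt_le_trans (DS hk hk' h3)).
apply: le_right => //; lra.
Qed.

End Inc.

Definition FL := fun w : seq 'I_3 => rcons w i1.
Definition FR := fun w : seq 'I_3 => rcons w i2.

Lemma iterL n w t : g w (t / 2 ^+ n) = g (iter n FL w) t.
Proof.
elim: n t => [|n IH] t; first by rewrite expr0 divr1.
have -> : t / 2 ^+ n.+1 = (t / 2) / 2 ^+ n by rewrite exprS; fld.
by rewrite IH /= /FL g_left.
Qed.

Lemma iterR n w t : g w (1 - (1 - t) / 2 ^+ n) = g (iter n FR w) t.
Proof.
elim: n t => [|n IH] t; first by rewrite expr0 divr1 subKr.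
have -> : 1 - (1 - t) / 2 ^+ n.+1 = 1 - (1 - (1 + t) / 2) / 2 ^+ n
  by rewrite exprS; fld.
by rewrite IH /= /FR g_right.
Qed.

Lemma valsL n w :
  let a := fa w in let b := fb w in let c := fc w in
  let d := c - b in let e := a - 2 * b + c in
  fb (iter n FL w) = b /\
  fc (iter n FL w) = b + (d + e * (3 ^+ n - 1) / 2) / 5 ^+ n /\
  fa (iter n FL w) = 2 * b - fc (iter n FL w) + 3 ^+ n * e / 5 ^+ n.
Proof.
move=> a b c d e; elim: n => [|n [IHb [IHc IHa]]].
  rewrite /= !expr0 /d /e /a /b /c; split => //; split; fld.
rewrite /= /FL va_l vb_l vc_l IHb IHa IHc; split => //.
rewrite !exprS; split; fld.
Qed.

Lemma valsR n w :
  let a := fa w in let b := fb w in let c := fc w in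
  let d := c - b in let e := a - 2 * c + b in
  fc (iter n FR w) = c /\
  fb (iter n FR w) = c - (d - e * (3 ^+ n - 1) / 2) / 5 ^+ n /\
  fa (iter n FR w) = 2 * c - fb (iter n FR w) + 3 ^+ n * e / 5 ^+ n.
Proof.
move=> a b c d e; elim: n => [|n [IHc [IHb IHa]]].
  rewrite /= !expr0 /d /e /a /b /c; split => //; split; fld.
rewrite /= /FR va_r vb_r vc_r IHc IHa IHb; split => //.
rewrite !exprS; split; fld.
Qed.

Lemma three_pow n : 1 + 2 * n%:R <= (3 : R) ^+ n.
Proof.
elim: n => [|n IH]; first by rewrite expr0 mulr0 addr0.
rewrite exprS -addn1 natrD; have := ler0n R n; lra.
Qed.

Lemma find_n (d e : R) : 0 < e -> exists n, d - e * (3 ^+ n - 1) / 2 <= 0.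
Proof.
move=> e0; exists (Num.Def.trunc (d / e)).+1.
set n := (Num.Def.trunc (d / e)).+1.
have h1 : d / e < n%:R by exact: truncnS_gt.
have h2 := three_pow n.
have h3 : d < e * n%:R.
  have hd : d = (d / e) * e by fld; rewrite gt_eqF.
  by rewrite {1}hd mulrC ltr_pM2l.
have h4 : e * n%:R <= e * (3 ^+ n - 1) / 2.
  rewrite -mulrA ler_pM2l //; lra.
lra.
Qed.

Lemma conv_inc : strictly_increasing01 (g [::]) -> inv (fa [::]) (fb [::]) (fc [::]).
Proof.
move=> SI.
have bc : fb [::] < fc [::].
  by rewrite -g0 -g1; apply: SI => //; rewrite ler01.
split => //; split.
- rewrite leNgt; apply/negP => hlt.
  have [n hn] := @find_n (fc [::] - fb [::]) (- (fa [::] - 2 * fb [::] + fc [::]))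
    ltac:(lra).
  have [hb [hc _]] := valsL n [::].
  have q1 : 0 < 1 / (2 : R) ^+ n by rewrite divr_gt0 ?two_pow_gt0.
  have q2 : 1 / (2 : R) ^+ n <= 1.
    rewrite ler_pdivrMr ?two_pow_gt0 // mul1r; apply: exprn_ege1; lra.
  have := SI 0 (1 / 2 ^+ n) (lexx 0) q1 q2.
  rewrite iterL g1 hc g0.
  have : (fc [::] - fb [::] + (fa [::] - 2 * fb [::] + fc [::]) * (3 ^+ n - 1) / 2) / 5 ^+ n <= 0.
    rewrite ler_pdivrMr ?exprn_gt0 // mul0r; lra.
  lra.
- rewrite leNgt; apply/negP => hlt.
  have [n hn] := @find_n (fc [::] - fb [::]) (fa [::] - 2 * fc [::] + fb [::])
    ltac:(lra).
  have [hc [hb _]] := valsR n [::].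
  have q1 : 0 < 1 / (2 : R) ^+ n by rewrite divr_gt0 ?two_pow_gt0.
  have q2 : 1 / (2 : R) ^+ n <= 1.
    rewrite ler_pdivrMr ?two_pow_gt0 // mul1r; apply: exprn_ege1; lra.
  have := SI (1 - (1 - 0) / 2 ^+ n) 1 ltac:(rewrite subr0; lra) ltac:(rewrite subr0; lra) (lexx 1).
  rewrite iterR g0 hb g1.
  have : (fc [::] - fb [::] - (fa [::] - 2 * fc [::] + fb [::]) * (3 ^+ n - 1) / 2) / 5 ^+ n <= 0.
    rewrite ler_pdivrMr ?exprn_gt0 // mul0r; lra.
  lra.
Qed.


Lemma ord3 (j : 'I_3) : j = i0 \/ j = i1 \/ j = i2.
Proof.
case: j => [[|[|[|//]]] hj].
- by left; apply: val_inj.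
- by right; left; apply: val_inj.
- by right; right; apply: val_inj.
Qed.

Lemma third {i j : 'I_3} : i != j -> exists k, i != k /\ j != k.
Proof.
by case: (ord3 i) => [->|[->|->]]; case: (ord3 j) => [->|[->|->]] //= _;
  [exists i2|exists i1|exists i2|exists i0|exists i1|exists i0].
Qed.

Lemma allconst (a0 : R) : fa [::] = a0 -> fb [::] = a0 -> fc [::] = a0 ->
  forall w j, f (V p0 p1 p2 w j) = a0.
Proof.
move=> ha hb hc w; elim/last_ind: w => [|w i IH] j.
  by case: (ord3 j) => [->|[->|->]].
rewrite V_rcons; case: (eqVneq j i) => [->|hji]; first by rewrite midpt_id IH.
have [k [h1 h2]] := third hji.
by rewrite (Hharm w j i k) // ?IH; fld.
Qed.

End Harm.

End P2.
Import P2.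
Set Implicit Arguments.


Section Top.
Variable R : realType.

Lemma ballP2 (x y : R * R) (e : R) : `|x.1 - y.1| < e -> `|x.2 - y.2| < e -> ball x e y.
Proof. move=> h1 h2. split => /=; rewrite -ball_normE /=. exact h1. exact h2. Qed.

Lemma closedK (K : set (R*R)) (x : R * R) : compact K ->
  (forall e, 0 < e -> exists y, K y /\ `|x.1 - y.1| < e /\ `|x.2 - y.2| < e) -> K x.
Proof.
move=> cK H. have cl : closed K by apply: compact_closed => //; exact: norm_hausdorff.
rewrite (closure_id K).1 //. move=> B /nbhs_ballP [e e0 hB].
have [y [Ky [h1 h2]]] := H e e0. exists y; split => //. apply: hB. exact: ballP2.
Qed.

Lemma contK (K : set (R*R)) (f : R * R -> R) : {within K, continuous f} ->
  forall x, K x -> forall eps, 0 < eps -> exists2 d, 0 < d &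
   forall y, K y -> `|x.1 - y.1| < d -> `|x.2 - y.2| < d -> `|f x - f y| < eps.
Proof.
move=> /subspace_continuousP H x Kx eps e0.
have := H x Kx. move=> /cvgrPdist_lt /(_ eps e0).
rewrite /within /= => /nbhs_ballP [d d0 hB]. exists d => // y Ky h1 h2.
by apply: (hB y).
Qed.

Lemma bnd (K : set (R*R)) : compact K -> exists M : R, forall x, K x -> `|x.1| <= M /\ `|x.2| <= M.
Proof. move=> /compact_bounded [M [_ HM]]. exists (`|M|+1) => x Kx.
have h : M < `|M| + 1. by apply: (le_lt_trans (ler_norm M)); rewrite ltrDl.
have := HM (`|M|+1) h x Kx. rewrite /= prod_normE => /=. rewrite ge_max. by case/andP.
Qed.

Variables p0 p1 p2 : (R * R)%type.
Variable K : set (R * R).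
Hypothesis hA : is_attractor p0 p1 p2 K.

Lemma Fmap_K i y : K y -> K (Fmap p0 p1 p2 i y).
Proof.
move=> Ky; have [_ [_ hE]] := hA; rewrite hE.
by exists i => //; exists y.
Qed.

Lemma Fword_K w y : K y -> K (Fword p0 p1 p2 w y).
Proof. by move=> Ky; elim: w => [//|i w IH]; rewrite Fword_cons; apply: Fmap_K. Qed.

Lemma Fword_fix j n : Fword p0 p1 p2 (nseq n j) (vtx p0 p1 p2 j) = vtx p0 p1 p2 j.
Proof. by elim: n => [//|n IH]; rewrite /= IH /Fmap midpt_id. Qed.

Lemma vtx_K j : K (vtx p0 p1 p2 j).
Proof.
have [cK [[x0 Kx0] _]] := hA.
apply: closedK => // e e0.
have [n hn] := pow_big (`|x0.1 - (vtx p0 p1 p2 j).1| + `|x0.2 - (vtx p0 p1 p2 j).2|) e0.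
exists (Fword p0 p1 p2 (nseq n j) x0); split; first exact: Fword_K.
have [h1 h2] := Fword_dist p0 p1 p2 (nseq n j) (vtx p0 p1 p2 j) x0.
rewrite Fword_fix size_nseq in h1 h2.
have P0 := two_pow_gt0 R n.
rewrite h1 h2 !normrM !normfV !(gtr0_norm P0) !ltr_pdivrMr //.
rewrite !(distrC (vtx _ _ _ _).1) !(distrC (vtx _ _ _ _).2).
have := normr_ge0 (x0.1 - (vtx p0 p1 p2 j).1).
have := normr_ge0 (x0.2 - (vtx p0 p1 p2 j).2).
rewrite [e * _]mulrC in hn. lra.
Qed.

Lemma V_K w j : K (V p0 p1 p2 w j).
Proof. exact/Fword_K/vtx_K. Qed.


Lemma E_dyad_K m : forall w k, (k <= 2 ^ m)%N -> K (E p0 p1 p2 w (k%:R / 2 ^+ m)).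
Proof.
elim: m => [|m IH] w k hk.
  case: k hk => [|[|//]] _; rewrite expr0 divr1.
    by rewrite /E edge0; apply: V_K.
  by rewrite /E edge1; apply: V_K.
case: (leqP k (2 ^ m)) => hkm.
  have -> : k%:R / 2 ^+ m.+1 = (k%:R / 2 ^+ m) / 2 :> R by rewrite exprS; fld.
  by rewrite -E_left; apply: IH.
have -> : k%:R / 2 ^+ m.+1 = (1 + (k - 2 ^ m)%:R / 2 ^+ m) / 2 :> R.
  by rewrite natrB ?(ltnW hkm) // natrX exprS; fld.
rewrite -E_right; apply: IH; rewrite expnS in hk; lia.
Qed.

Lemma edge_diff (q1 q2 : R * R) t s :
  `|(edge12 q1 q2 t).1 - (edge12 q1 q2 s).1| = `|t - s| * `|q2.1 - q1.1| /\
  `|(edge12 q1 q2 t).2 - (edge12 q1 q2 s).2| = `|t - s| * `|q2.2 - q1.2|.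
Proof.
rewrite /edge12 /= -!normrM; split; congr (`| _ |); ring.
Qed.

Definition Bd := `|p2.1 - p1.1| + `|p2.2 - p1.2| + 1.
Lemma Bd_gt0 : 0 < Bd.
Proof. rewrite /Bd; have := normr_ge0 (p2.1 - p1.1); have := normr_ge0 (p2.2 - p1.2); lra. Qed.

Lemma edge_close t s d : `|t - s| < d / Bd ->
  `|(edge12 p1 p2 t).1 - (edge12 p1 p2 s).1| < d /\
  `|(edge12 p1 p2 t).2 - (edge12 p1 p2 s).2| < d.
Proof.
move=> h; have [-> ->] := edge_diff p1 p2 t s.
have B0 := Bd_gt0.
move: h; rewrite ltr_pdivlMr // /Bd => h.
have := normr_ge0 (p2.1 - p1.1); have := normr_ge0 (p2.2 - p1.2); have := normr_ge0 (t - s).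
split; nra.
Qed.

Lemma edge_K t : 0 <= t -> t <= 1 -> K (edge12 p1 p2 t).
Proof.
move=> t0 t1; have [cK _] := hA.
apply: closedK => // e e0.
have ed : 0 < e / Bd by rewrite divr_gt0 // Bd_gt0.
have [m [k [hk hd]]] := dyadic_near t0 t1 ed.
exists (edge12 p1 p2 (k%:R / 2 ^+ m)); split; first exact: (E_dyad_K [::] hk).
exact: edge_close.
Qed.

Variable f : R * R -> R.
Hypothesis hcont : {within K, continuous f}.

Lemma HCont_f : @HCont R p0 p1 p2 f.
Proof.
move=> t t0 t1 e e0.
have [d d0 hd] := contK hcont (edge_K t0 t1) e0.
exists (d / Bd); first by rewrite divr_gt0 // Bd_gt0.
move=> m k hk htd; have [h1 h2] := edge_close htd.
exact: (hd _ (E_dyad_K [::] hk)).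
Qed.

Lemma decomp n : forall x, K x -> exists w y, size w = n /\ K y /\ x = Fword p0 p1 p2 w y.
Proof.
elim: n => [|n IH] x Kx; first by exists [::], x.
have [_ [_ hE]] := hA.
move: Kx; rewrite {1}hE => -[i _ [y Ky <-]].
have [w [z [hs [Kz ->]]]] := IH y Ky.
by exists (i :: w), z; rewrite /= hs.
Qed.

Lemma const_K (a0 : R) : (forall w j, f (V p0 p1 p2 w j) = a0) -> forall x, K x -> f x = a0.
Proof.
move=> hV x Kx; have [cK _] := hA.
have [M hM] := bnd cK.
apply/eqP; rewrite -subr_eq0 -normr_eq0; apply/eqP.
apply/eqP; rewrite eq_le normr_ge0 andbT; apply/negP => /negP; rewrite -ltNge => hlt.
have [d d0 hd] := contK hcont Kx hlt.
have [n hn] := pow_big (2 * M) d0.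
have [w [y [hs [Ky hx]]]] := decomp n Kx.
have Kz := V_K w i0.
have D1 : `|x.1 - (V p0 p1 p2 w i0).1| < d.
  have [h1 _] := Fword_dist p0 p1 p2 w y (vtx p0 p1 p2 i0).
  rewrite hx /V h1 hs normrM normfV (gtr0_norm (@two_pow_gt0 R n)) ltr_pdivrMr ?two_pow_gt0 //.
  have [hy1 _] := hM _ Ky; have [hp1 _] := hM _ (vtx_K i0).
  have := ler_normB y.1 (vtx p0 p1 p2 i0).1.
  rewrite [d * _]mulrC in hn; lra.
have D2 : `|x.2 - (V p0 p1 p2 w i0).2| < d.
  have [_ h2] := Fword_dist p0 p1 p2 w y (vtx p0 p1 p2 i0).
  rewrite hx /V h2 hs normrM normfV (gtr0_norm (@two_pow_gt0 R n)) ltr_pdivrMr ?two_pow_gt0 //.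
  have [_ hy2] := hM _ Ky; have [_ hp2] := hM _ (vtx_K i0).
  have := ler_normB y.2 (vtx p0 p1 p2 i0).2.
  rewrite [d * _]mulrC in hn; lra.
have := hd _ Kz D1 D2.
by rewrite hV ltxx.
Qed.

End Top.

Lemma harm_neg (R : realType) (p0 p1 p2 : R * R) (f : R * R -> R) :
  (forall w (i j k : 'I_3), i != j -> j != k -> i != k ->
  f (midpt (V p0 p1 p2 w i) (V p0 p1 p2 w j)) =
  (2 * f (V p0 p1 p2 w i) + 2 * f (V p0 p1 p2 w j) + f (V p0 p1 p2 w k)) / 5) ->
  (forall w (i j k : 'I_3), i != j -> j != k -> i != k ->
  (fun x => - f x) (midpt (V p0 p1 p2 w i) (V p0 p1 p2 w j)) =
  (2 * (fun x => - f x) (V p0 p1 p2 w i) + 2 * (fun x => - f x) (V p0 p1 p2 w j)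
   + (fun x => - f x) (V p0 p1 p2 w k)) / 5).
Proof. by move=> H w i j k h1 h2 h3 /=; rewrite (H w i j k) //; field. Qed.

Lemma HCont_neg (R : realType) (p0 p1 p2 : R * R) (f : R * R -> R) :
  @HCont R p0 p1 p2 f -> @HCont R p0 p1 p2 (fun x => - f x).
Proof.
move=> H t t0 t1 e e0; have [d d0 hd] := H t t0 t1 e e0.
exists d => // m k hk ht; rewrite /g /= -opprD normrN; exact: hd.
Qed.

Lemma dec_inc (R : realType) (h : R -> R) :
  strictly_decreasing01 h <-> strictly_increasing01 (fun t => - h t).
Proof.
by split => H s t s0 st t1; have := H s t s0 st t1; rewrite ?ltrN2.
Qed.

Theorem theorem3 (R : realType) (p0 p1 p2 : R * R) (K : set (R * R))
    (f : R * R -> R) (alpha beta gamma : R) :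
  unit_equilateral p0 p1 p2 ->
  is_attractor p0 p1 p2 K ->
  sg_harmonic p0 p1 p2 K f ->
  f p0 = alpha -> f p1 = beta -> f p2 = gamma ->
  let g := fun t : R => f (edge12 p1 p2 t) in
  (strictly_increasing01 g <->
     beta < gamma /\ 2 * beta - gamma <= alpha /\ alpha <= 2 * gamma - beta) /\
  ((exists x y, K x /\ K y /\ f x <> f y) ->
   (strictly_increasing01 g \/ strictly_decreasing01 g <->
     (3 * beta - (alpha + beta + gamma)) * (3 * gamma - (alpha + beta + gamma)) <= 0)).
Proof.
move=> _ hA [hcont hH] ha hb hc g.
have Hh : forall w (i j k : 'I_3), i != j -> j != k -> i != k ->
  f (midpt (V p0 p1 p2 w i) (V p0 p1 p2 w j)) =
  (2 * f (V p0 p1 p2 w i) + 2 * f (V p0 p1 p2 w j) + f (V p0 p1 p2 w k)) / 5.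
  by move=> w i j k h1 h2 h3; exact: (hH (size w) w erefl i j k h1 h2 h3).
have HC := HCont_f hA hcont.
have Hn := harm_neg Hh.
have HCn := HCont_neg HC.
have gE : g = P2.g R p0 p1 p2 f [::] by [].
have P1 : strictly_increasing01 g <->
     beta < gamma /\ 2 * beta - gamma <= alpha /\ alpha <= 2 * gamma - beta.
  rewrite gE; split.
    by move=> /(@conv_inc R p0 p1 p2 f Hh); rewrite /P2.inv /= ha hb hc.
  by move=> hi; apply: (@inc_of_inv R p0 p1 p2 f Hh) => //; rewrite /P2.inv /= ha hb hc.
have P1n : strictly_decreasing01 g <->
     gamma < beta /\ 2 * gamma - beta <= alpha /\ alpha <= 2 * beta - gamma.
  rewrite dec_inc gE; split.
    move=> /(@conv_inc R p0 p1 p2 (fun x => - f x) Hn); rewrite /P2.inv /= ha hb hc; lra.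
  move=> hi; apply: (@inc_of_inv R p0 p1 p2 (fun x => - f x) Hn) => //; rewrite /P2.inv /= ha hb hc; lra.
split => // -[x [y [Kx [Ky fxy]]]]; split.
  by case=> [/P1|/P1n]; nra.
move=> hp.
case: (ltgtP beta gamma) => hbc.
- left; apply/P1; nra.
- right; apply/P1n; nra.
- have hab : alpha = beta by nra.
  have hV := @allconst R p0 p1 p2 f Hh beta ltac:(by rewrite /= ha) ltac:(by rewrite /= hb)
    ltac:(by rewrite /= hc hbc).
  by exfalso; apply: fxy; rewrite (const_K hA hcont hV Kx) (const_K hA hcont hV Ky).
Qed.
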